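(* Let $X$ be a CFG-space over a Boolean ring $B$ and $0\in X$. Then the pointed space $(X,0)$ possesses a base.
   Context: $B$ is a Boolean ring ($a\vee b=a+b+ab$, $a\le b\iff ab=a$, $\bar a=1+a$; $a_1\oplus\cdots\oplus a_n$ denotes a sum of pairwise disjoint elements). A Boolean metric space over $B$: set $X$ with $d:X\times X\to B$, $d(x,y)=0\iff x=y$, symmetric, $d(x,z)\le d(x,y)\vee d(y,z)$. For $x_1,\dots,x_n\in X$ and $a_1,\dots,a_n\in B$ with $a_1\oplus\cdots\oplus a_n=1$, $x$ is a convex combination of the $x_i$ with coefficients $a_i$ if $a_id(x,x_i)=0$ for all $i$. $X$ is convex if all such combinations exist; a CFG-space is a convex space in which every element is a convex combination of elements of some fixed finite subset. In a pointed space $(X,0)$ write $|x|=d(0,x)$. Two elements $x,y$ are orthogonal if $d(x,y)=|x|\vee|y|$. A finite set $R\subseteq X$ is orthogonal if $0\notin R$ and any two distinct elements of $R$ are orthogonal. A referential (reference system) of $(X,0)$ is an orthogonal set $R$ such that every element of $X$ is a convex combination of elements of $R\cup\{0\}$. A base of $(X,0)$ is a referential $\{x_1,\dots,x_n\}$ with $|x_1|\ge|x_2|\ge\cdots\ge|x_n|$. *)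

(* Defs.v *)
From HB Require Import structures.
From mathcomp Require Import all_boot all_order all_algebra.
Set Implicit Arguments. Unset Strict Implicit. Unset Printing Implicit Defensive.
Import GRing.Theory.
Local Open Scope ring_scope.

Definition boolean_ring (B : comPzRingType) : Prop := forall a : B, a * a = a.

Definition bjoin {B : comPzRingType} (a b : B) : B := a + b + a * b.
Definition ble {B : comPzRingType} (a b : B) : Prop := a * b = a.

Definition disjoint_partition {B : comPzRingType} (n : nat) (a : 'I_n -> B) : Prop :=
  (forall i j : 'I_n, i != j -> a i * a j = 0) /\ \sum_(i < n) a i = 1.

Definition boolean_metric {B : comPzRingType} {X : Type} (d : X -> X -> B) : Prop :=
  (forall x y, d x y = 0 <-> x = y) /\
  (forall x y, d x y = d y x) /\
  (forall x y z, ble (d x z) (bjoin (d x y) (d y z))).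

Definition convex_comb {B : comPzRingType} {X : Type} (d : X -> X -> B)
  (y : X) (n : nat) (x : 'I_n -> X) (a : 'I_n -> B) : Prop :=
  disjoint_partition a /\ forall i, a i * d y (x i) = 0.

Definition convex_space {B : comPzRingType} {X : Type} (d : X -> X -> B) : Prop :=
  forall (n : nat) (x : 'I_n -> X) (a : 'I_n -> B),
    disjoint_partition a -> exists y, convex_comb d y x a.

Definition convex_comb_of {B : comPzRingType} {X : Type} (d : X -> X -> B)
  (P : X -> Prop) (y : X) : Prop :=
  exists (n : nat) (x : 'I_n -> X) (a : 'I_n -> B),
    (forall i, P (x i)) /\ convex_comb d y x a.

Definition CFG_space {B : comPzRingType} {X : Type} (d : X -> X -> B) : Prop :=
  convex_space d /\
  exists (m : nat) (s : 'I_m -> X),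
    forall y, convex_comb_of d (fun z => exists j, z = s j) y.

(* pointed space (X, o): |x| = d o x *)
Definition orthogonal {B : comPzRingType} {X : Type} (d : X -> X -> B) (o x y : X) : Prop :=
  d x y = bjoin (d o x) (d o y).

Definition orthogonal_set {B : comPzRingType} {X : Type} (d : X -> X -> B) (o : X)
  (n : nat) (r : 'I_n -> X) : Prop :=
  (forall i, r i <> o) /\ (forall i j, i != j -> orthogonal d o (r i) (r j)).

Definition referential {B : comPzRingType} {X : Type} (d : X -> X -> B) (o : X)
  (n : nat) (r : 'I_n -> X) : Prop :=
  injective r /\ orthogonal_set d o r /\
  forall y, convex_comb_of d (fun z => z = o \/ exists i, z = r i) y.

Definition is_base {B : comPzRingType} {X : Type} (d : X -> X -> B) (o : X)
  (n : nat) (r : 'I_n -> X) : Prop :=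
  referential d o r /\
  forall i j : 'I_n, (i <= j)%N -> ble (d o (r j)) (d o (r i)).

Definition has_base {B : comPzRingType} {X : Type} (d : X -> X -> B) (o : X) : Prop :=
  exists (n : nat) (r : 'I_n -> X), is_base d o r.

(* Main.v *)
Require Import Defs.
From HB Require Import structures.
From mathcomp Require Import all_boot all_order all_algebra.
From Stdlib Require Import ClassicalEpsilon Classical.
Set Implicit Arguments. Unset Strict Implicit. Unset Printing Implicit Defensive.
Import GRing.Theory.
Local Open Scope ring_scope.



Inductive bt : Type := BV (i : nat) | B0 | B1 | BAdd (x y : bt) | BMul (x y : bt) | BOpp (x : bt).

Fixpoint evB (B : comPzRingType) (e : nat -> B) (t : bt) : B :=
  match t with
  | BV i => e i | B0 => 0 | B1 => 1
  | BAdd x y => evB e x + evB e y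
  | BMul x y => evB e x * evB e y
  | BOpp x => - evB e x end.

Fixpoint evb (e : nat -> bool) (t : bt) : bool :=
  match t with
  | BV i => e i | B0 => false | B1 => true
  | BAdd x y => xorb (evb e x) (evb e y)
  | BMul x y => evb e x && evb e y
  | BOpp x => evb e x end.

Lemma char2 (B : comPzRingType) (HB : boolean_ring B) (x : B) : x + x = 0.
Proof.
have h := HB (x + x).
rewrite mulrDl !mulrDr HB in h.
have : (x + x) + (x + x) = 0 + (x + x) by rewrite add0r -{3}h addrA.
by move/addIr.
Qed.

Lemma oppB (B : comPzRingType) (HB : boolean_ring B) (x : B) : - x = x.
Proof. by apply/esym/eqP; rewrite -addr_eq0 char2. Qed.

Definition b2B (B : comPzRingType) (b : bool) : B := if b then 1 else 0.

Lemma evb_hom (B : comPzRingType) (HB : boolean_ring B) e t :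
  evB (fun i => b2B B (e i)) t = b2B B (evb e t).
Proof.
elim: t => //= [x -> y ->|x -> y ->|x ->].
- by case: (evb e x); case: (evb e y); rewrite /b2B /= ?addr0 ?add0r ?char2.
- by case: (evb e x); case: (evb e y); rewrite /b2B /= ?mulr0 ?mul0r ?mulr1.
- by rewrite oppB.
Qed.

Definition upd {B : comPzRingType} (e : nat -> B) n (v : B) := fun i => if i == n then v else e i.

Lemma evB_ext (B : comPzRingType) (e1 e2 : nat -> B) t :
  (forall i, e1 i = e2 i) -> evB e1 t = evB e2 t.
Proof. by move=> h; elim: t => /= [i|||x -> y ->|x -> y ->|x ->]. Qed.

Lemma shannon (B : comPzRingType) (HB : boolean_ring B) (e : nat -> B) n t :
  evB e t = e n * evB (upd e n 1) t + (1 - e n) * evB (upd e n 0) t.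
Proof.
set x := e n.
have s1 : forall a : B, x * a + (1 - x) * a = a by move=> a; rewrite -mulrDl addrC subrK mul1r.
have xy : x * (1 - x) = 0 by rewrite mulrBr mulr1 HB subrr.
have yx : (1 - x) * x = 0 by rewrite mulrC.
have yy : (1 - x) * (1 - x) = 1 - x by apply: HB.
have s10 : x * 1 + (1 - x) * 0 = x by rewrite mulr1 mulr0 addr0.
have s11 : x * 1 + (1 - x) * 1 = 1 by rewrite s1.
set y := 1 - x in s1 xy yx yy s10 s11 *; clearbody y.
elim: t => /= [i|||a -> b ->|a -> b ->|a ->].
- rewrite /upd; case: eqP => [->|_]; first by [].
  by rewrite s1.
- by rewrite !mulr0 addr0.
- by [].
- by rewrite !mulrDr addrACA.
- set a1 := evB _ a; set a0 := evB _ a; set b1 := evB _ b; set b0 := evB _ b.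
  rewrite !mulrDl !mulrDr.
  rewrite (mulrACA x a1 x b1) (mulrACA x a1 y b0) (mulrACA y a0 x b1) (mulrACA y a0 y b0).
  by rewrite HB xy yx yy !mul0r addr0 add0r.
- by rewrite !mulrN opprD.
Qed.

Definition updb (e : nat -> bool) n (v : bool) := fun i => if i == n then v else e i.

Fixpoint chk (n : nat) (be : nat -> bool) (t u : bt) : bool :=
  if n is n'.+1 then chk n' (updb be n' true) t u && chk n' (updb be n' false) t u
  else evb be t == evb be u.

Definition mix {B : comPzRingType} n (env : nat -> B) (be : nat -> bool) :=
  fun i => if (i < n)%N then env i else b2B B (be i).

Lemma chk_ok (B : comPzRingType) (HB : boolean_ring B) n (env : nat -> B) be t u :
  chk n be t u -> evB (mix n env be) t = evB (mix n env be) u.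
Proof.
elim: n be => [|n IH] be /=.
- move/eqP=> h.
  rewrite (@evB_ext _ _ (fun i => b2B B (be i))) // (@evB_ext _ (mix 0 env be) (fun i => b2B B (be i))) //.
  by rewrite !(evb_hom HB) h.
- case/andP=> h1 h0.
  rewrite (shannon HB _ n t) (shannon HB _ n u).
  have e1 : forall w, evB (upd (mix n.+1 env be) n 1) w = evB (mix n env (updb be n true)) w.
    move=> w; apply: evB_ext => i; rewrite /upd /mix /updb.
    case: eqP => [->|ne]; first by rewrite ltnn.
    rewrite ltnS leq_eqVlt; case: ltnP => //=; case: eqP => //.
  have e0 : forall w, evB (upd (mix n.+1 env be) n 0) w = evB (mix n env (updb be n false)) w.
    move=> w; apply: evB_ext => i; rewrite /upd /mix /updb.
    case: eqP => [->|ne]; first by rewrite ltnn.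
    rewrite ltnS leq_eqVlt; case: ltnP => //=; case: eqP => //.
  by rewrite !e1 !e0 (IH _ h1) (IH _ h0).
Qed.

Definition Qh (hs : seq (bt * bt)) : bt :=
  foldr (fun h acc => BMul (BAdd B1 (BOpp (BAdd h.1 (BOpp h.2)))) acc) B1 hs.

Fixpoint himp (P : seq Prop) (C : Prop) : Prop :=
  match P with [::] => C | p :: P' => p -> himp P' C end.

Fixpoint holds {B : comPzRingType} (e : nat -> B) (hs : seq (bt * bt)) : Prop :=
  match hs with [::] => True | p :: hs' => evB e p.1 = evB e p.2 /\ holds e hs' end.

Lemma bdec (B : comPzRingType) (HB : boolean_ring B) (env : seq B) (hs : seq (bt * bt)) (t u : bt) :
  chk (size env) (fun _ => false) (BMul t (Qh hs)) (BMul u (Qh hs)) = true ->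
  himp (map (fun h => evB (nth 0 env) h.1 = evB (nth 0 env) h.2) hs)
       (evB (nth 0 env) t = evB (nth 0 env) u).
Proof.
move=> /(chk_ok HB (nth 0 env)) h.
have ee : forall w, evB (mix (size env) (nth 0 env) (fun _ => false)) w = evB (nth 0 env) w.
  move=> w; apply: evB_ext => i; rewrite /mix; case: ltnP => // hi.
  by rewrite nth_default.
rewrite /= !ee in h.
suff: (holds (nth 0 env) hs) -> evB (nth 0 env) t = evB (nth 0 env) u.
  clear h ee; elim: hs => /= [|p hs IH] H; first by apply: H.
  move=> Hh; apply: IH => Hall; exact: H.
move=> Hall.
have q1 : evB (nth 0 env) (Qh hs) = 1.
  clear h ee; elim: hs Hall => //= p hs IH [Hp Hall].
  by rewrite IH // Hp subrr oppr0 addr0 mulr1.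
by rewrite q1 !mulr1 in h.
Qed.

Ltac inl a l := lazymatch l with
  | nil => constr:(false) | cons a _ => constr:(true) | cons _ ?l' => inl a l' end.
Ltac idx a l := lazymatch l with
  | cons a _ => constr:(0%nat) | cons _ ?l' => let n := idx a l' in constr:(S n) end.
Ltac coll t l := lazymatch t with
  | (?x + ?y)%R => let l := coll x l in coll y l
  | (?x * ?y)%R => let l := coll x l in coll y l
  | (- ?x)%R => coll x l
  | 0%R => l | 1%R => l
  | _ => let b := inl t l in lazymatch b with true => l | false => constr:(cons t l) end
  end.
Ltac reif t l := lazymatch t with
  | (?x + ?y)%R => let a := reif x l in let b := reif y l in constr:(BAdd a b)
  | (?x * ?y)%R => let a := reif x l in let b := reif y l in constr:(BMul a b)
  | (- ?x)%R => let a := reif x l in constr:(BOpp a)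
  | 0%R => constr:(B0) | 1%R => constr:(B1)
  | _ => let n := idx t l in constr:(BV n)
  end.
Ltac collg g l := lazymatch g with
  | (?a = ?b) -> ?g' => let l := coll a l in let l := coll b l in collg g' l
  | ?a = ?b => let l := coll a l in coll b l end.
Ltac reifh g l := lazymatch g with
  | (?a = ?b) -> ?g' => let x := reif a l in let y := reif b l in let r := reifh g' l in constr:(cons (x, y) r)
  | _ = _ => constr:(@nil (bt * bt)) end.
Ltac reifc g l := lazymatch g with
  | _ -> ?g' => reifc g' l
  | ?a = ?b => let x := reif a l in let y := reif b l in constr:((x, y)) end.

Ltac bsolve HB :=
  rewrite /bjoin /ble;
  lazymatch goal with |- ?g =>
    lazymatch type of HB with boolean_ring ?B =>
    let l := collg g (@nil B) in
    let hs := reifh g l in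
    let c := reifc g l in
    lazymatch c with (?t, ?u) =>
      refine (@bdec B HB l hs t u _); vm_compute; reflexivity end end end.




Definition comb {B : comPzRingType} {X : Type} (d : X -> X -> B) (N : nat) (x : nat -> X) (y : X) : Prop :=
  exists a : nat -> B,
    (forall i k, (i < N)%N -> (k < N)%N -> i != k -> a i * a k = 0) /\
    \sum_(i < N) a i = 1 /\
    (forall i, (i < N)%N -> a i * d y (x i) = 0).

Lemma sum_ind (B : comPzRingType) N i0 (u : B) : (i0 < N)%N ->
  \sum_(i < N) (if (i : nat) == i0 then u else 0) = u.
Proof.
move=> h; rewrite (bigD1 (Ordinal h)) //= eqxx big1 ?addr0 // => i ne.
by case: eqP => // ei; move: ne; rewrite -val_eqE /= ei eqxx.
Qed.

Lemma dxx (B : comPzRingType) X (d : X -> X -> B) (Hd : boolean_metric d) x : d x x = 0.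
Proof. by case: Hd => [h _]; apply: (proj2 (h x x)). Qed.

Lemma dsym (B : comPzRingType) X (d : X -> X -> B) (Hd : boolean_metric d) x y : d x y = d y x.
Proof. by case: Hd => [_ [h _]]. Qed.

Lemma dtri (B : comPzRingType) X (d : X -> X -> B) (Hd : boolean_metric d) x y z :
  d x z * bjoin (d x y) (d y z) = d x z.
Proof. by case: Hd => [_ [_ h]]; apply: h. Qed.

Lemma d0eq (B : comPzRingType) X (d : X -> X -> B) (Hd : boolean_metric d) x y : d x y = 0 -> x = y.
Proof. by case: Hd => [h _]; apply: (proj1 (h x y)). Qed.

Lemma comb_pt (B : comPzRingType) (HB : boolean_ring B) X (d : X -> X -> B) N x y i0 :
  (i0 < N)%N -> d y (x i0) = 0 -> comb d N x y.
Proof.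
move=> hi hd; exists (fun i => if i == i0 then 1 else 0); split; [|split].
- move=> i k _ _ ne; case: (eqVneq i i0) => [ei|_]; last by rewrite mul0r.
  by rewrite -ei eq_sym (negbTE ne) mulr0.
- exact: sum_ind.
- by move=> i _; case: (eqVneq i i0) => [->|]; rewrite ?hd ?mulr0 ?mul0r.
Qed.

Lemma comb_two (B : comPzRingType) (HB : boolean_ring B) X (d : X -> X -> B) N x y i0 i1 (E : B) :
  (i0 < N)%N -> (i1 < N)%N -> i0 != i1 ->
  E * d y (x i0) = 0 -> (1 - E) * d y (x i1) = 0 -> comb d N x y.
Proof.
move=> h0 h1 ne hE hE'.
exists (fun i => (if i == i0 then E else 0) + (if i == i1 then 1 - E else 0)); split; [|split].
- move=> i k _ _ nik.
  have EE : E * (1 - E) = 0 by rewrite mulrBr mulr1 HB subrr.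
  have EE' : (1 - E) * E = 0 by rewrite mulrC.
  case: (eqVneq i i0) => e0; case: (eqVneq i i1) => e1;
  case: (eqVneq k i0) => f0; case: (eqVneq k i1) => f1;
  rewrite ?addr0 ?add0r ?mulr0 ?mul0r ?EE ?EE' //; exfalso; move: nik ne;
  subst; rewrite ?eqxx //.
- rewrite (eq_bigr (fun i : 'I_N => (if (i:nat) == i0 then E else 0) + (if (i:nat) == i1 then 1 - E else 0))) //.
  by rewrite big_split /= !sum_ind // addrC subrK.
- move=> i _; case: (eqVneq i i0) => e0; case: (eqVneq i i1) => e1;
  rewrite ?addr0 ?add0r ?mul0r //; subst => //.
  by move: ne; rewrite eqxx.
Qed.

Lemma comb_trans (B : comPzRingType) (HB : boolean_ring B) X (d : X -> X -> B) (Hd : boolean_metric d)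
  N M x z y : comb d N x y -> (forall i, (i < N)%N -> comb d M z (x i)) -> comb d M z y.
Proof.
case=> a [ad [asum ac]] H.
have : forall i, exists b : nat -> B, (i < N)%N ->
    (forall k l, (k < M)%N -> (l < M)%N -> k != l -> b k * b l = 0) /\
    \sum_(k < M) b k = 1 /\ (forall k, (k < M)%N -> b k * d (x i) (z k) = 0).
  move=> i; case: (ltnP i N) => hi; last by exists (fun _ => 0).
  by case: (H i hi) => b hb; exists b.
move=> Hb.
have [b bP] : exists b : nat -> nat -> B, forall i, (i < N)%N ->
    (forall k l, (k < M)%N -> (l < M)%N -> k != l -> b i k * b i l = 0) /\
    \sum_(k < M) b i k = 1 /\ (forall k, (k < M)%N -> b i k * d (x i) (z k) = 0).
  exists (fun i => proj1_sig (constructive_indefinite_description _ (Hb i))).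
  move=> i; exact: (proj2_sig (constructive_indefinite_description _ (Hb i))).
clear Hb.
exists (fun k => \sum_(i < N) a i * b i k); split; [|split].
- move=> k l hk hl nkl; rewrite big_distrl /=; apply: big1 => i _.
  rewrite big_distrr /=; apply: big1 => i' _.
  case: (eqVneq (i : nat) i') => [ei|ne].
  + rewrite -ei; case: (bP i (ltn_ord i)) => bd _.
    move: (bd k l hk hl nkl); bsolve HB.
  + have := ad i i' (ltn_ord i) (ltn_ord i') ne.
    bsolve HB.
- rewrite exchange_big /=.
  rewrite -[RHS]asum; apply: eq_bigr => i _.
  rewrite -big_distrr /=.
  by case: (bP i (ltn_ord i)) => _ [-> _]; rewrite mulr1.
- move=> k hk; rewrite big_distrl /=; apply: big1 => i _.
  case: (bP i (ltn_ord i)) => _ [_ bc].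
  have h1 := ac i (ltn_ord i); have h2 := bc k hk.
  have t1 := dtri Hd y (x i) (z k).
  move: h1 h2 t1; move: (a i) (b i k) (d y (x i)) (d (x i) (z k)) (d y (z k)) => A u p q w.
  bsolve HB.
Qed.



Definition oc {X : Type} (o : X) (r : nat -> X) (i : nat) : X := if i is i'.+1 then r i' else o.

Lemma glue_ex (B : comPzRingType) (HB : boolean_ring B) X (d : X -> X -> B) (Hconv : convex_space d)
  (a : B) x y : exists z, a * d z x = 0 /\ (1 - a) * d z y = 0.
Proof.
have hp : disjoint_partition (fun i : 'I_2 => if i == ord0 then a else 1 - a).
  split.
  - move=> [[|[|i]] hi] [[|[|k]] hk] //= _;
    by rewrite ?mulrBr ?mulrBl ?mulr1 ?mul1r HB subrr.
  - by rewrite !big_ord_recl big_ord0 /= addr0 addrC subrK.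
have [z [_ hz]] := Hconv 2 (fun i : 'I_2 => if i == ord0 then x else y) _ hp.
exists z; split.
- by have := hz ord0.
- by have := hz (Ordinal (isT : (1 < 2)%N)).
Qed.

Lemma glue_d (B : comPzRingType) (HB : boolean_ring B) X (d : X -> X -> B) (Hd : boolean_metric d)
  (a : B) x y z w : a * d z x = 0 -> (1 - a) * d z y = 0 ->
  d w z = a * d w x + (1 - a) * d w y.
Proof.
have t1 := dtri Hd w x z; have t2 := dtri Hd w z x; have t3 := dtri Hd w y z; have t4 := dtri Hd w z y.
rewrite (dsym Hd x z) in t1; rewrite (dsym Hd y z) in t3.
move: t1 t2 t3 t4; bsolve HB.
Qed.

Lemma tele (B : comPzRingType) (g : nat -> B) m : \sum_(i < m) (g i - g i.+1) = g 0%N - g m.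
Proof.
elim: m => [|m IH]; first by rewrite big_ord0 subrr.
by rewrite big_ord_recr /= IH addrA subrK.
Qed.



Lemma core (B : comPzRingType) (HB : boolean_ring B) X (d : X -> X -> B) (Hd : boolean_metric d)
  (Hconv : convex_space d) (o : X) (m : nat) (s : nat -> X) :
  forall j, (j <= m)%N -> exists r : nat -> X,
  (forall i k, i != k -> Defs.orthogonal d o (r i) (r k)) /\
  (forall i k, (i <= k)%N -> ble (d o (r k)) (d o (r i))) /\
  (forall i, (j <= i)%N -> r i = o) /\
  (forall i, (i < j)%N -> comb d m.+1 (oc o r) (s i)).
Proof.
elim=> [_|j IH hj].
  exists (fun _ => o); split; [|split; [|split]] => //.
  - by move=> i k _; rewrite /Defs.orthogonal /bjoin !(dxx Hd) mulr0 !addr0.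
  - by move=> i k _; rewrite /ble (dxx Hd) mulr0.
have [r [Ho [Hdec [Hz Hc]]]] := IH (ltnW hj).
have [t Ht] : exists t, s j = t by exists (s j).
have [P [HP0 HPS]] : exists P : nat -> B, P 0%N = 1 /\ forall k, P k.+1 = P k * d t (r k).
  exists (fun k => \prod_(i < k) d t (r i)); split; first by rewrite big_ord0.
  by move=> k; rewrite big_ord_recr.
have [e He] : exists e, e = d o t * P m by exists (d o t * P m).
have [p [Hp0 HpS]] : exists p : nat -> B, p 0%N = 1 /\ forall k, p k.+1 = d o (r k).
  by exists (fun k => if k is k'.+1 then d o (r k') else 1).
have [E HE] : exists E : nat -> B, forall k, E k = e * p k * (1 - d o (r k)).
  by exists (fun k => e * p k * (1 - d o (r k))).
have Fn : forall i, (j <= i)%N -> d o (r i) = 0 by move=> i hi; rewrite Hz // (dxx Hd).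
have Fp : forall k l, (k < l)%N -> p l * d o (r k) = p l.
  by move=> k [|l] // hl; rewrite HpS; apply: Hdec.
have Fpn : forall k, d o (r k) * p k = d o (r k).
  by move=> [|k]; rewrite ?Hp0 ?mulr1 // HpS; apply: Hdec.
have FPD : forall k l, (k < l)%N -> P l * d t (r k) = P l.
  move=> k; elim=> [//|l IHl]; rewrite ltnS leq_eqVlt => /orP[/eqP->|hl].
    by rewrite HPS -mulrA HB.
  by rewrite HPS mulrAC IHl.
have Fet : e * d o t = e by rewrite He; bsolve HB.
have FeD : forall k, e * d t (r k) = e.
  move=> k; case: (ltnP k m) => hk; first by rewrite He -mulrA FPD.
  by rewrite Hz ?(leq_trans (ltnW hj)) // (dsym Hd t o).
have FE0 : forall k, (j < k)%N -> E k = 0.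
  by move=> [|k] // hk; rewrite HE HpS Fn // mulr0 mul0r.
have : forall k, exists z, E k * d z t = 0 /\ (1 - E k) * d z (r k) = 0.
  by move=> k; apply: glue_ex.
move=> Hg.
have [r' Hr'] : exists r' : nat -> X, forall k, E k * d (r' k) t = 0 /\ (1 - E k) * d (r' k) (r k) = 0.
  exists (fun k => proj1_sig (constructive_indefinite_description _ (Hg k))).
  move=> k; exact: (proj2_sig (constructive_indefinite_description _ (Hg k))).
clear Hg.
have F1 : forall w k, d w (r' k) = E k * d w t + (1 - E k) * d w (r k).
  by move=> w k; case: (Hr' k) => h1 h2; apply: glue_d.
exists r'; split; [|split; [|split]].
- move=> i k nik.
  wlog lt : i k nik / (i < k)%N => [W|].
    case: (ltngtP i k) => h; first exact: W.
      have := W k i _ h; rewrite eq_sym => /(_ nik); rewrite /Defs.orthogonal (dsym Hd (r' k)) => ->.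
      bsolve HB.
    by move: nik; rewrite h eqxx.
  have hki : k != i by rewrite eq_sym.
  rewrite /Defs.orthogonal (F1 (r' i) k) (dsym Hd (r' i) t) (F1 t i) (dsym Hd (r' i) (r k)) (F1 (r k) i).
  rewrite (dsym Hd (r k) t) (F1 o i) (F1 o k) (dxx Hd t) (Ho k i hki).
  have h1 := HE i; have h2 := HE k; have h3 := Fp i k lt; have h4 := FeD i; have h5 := FeD k.
  have h6 := Hdec i k (ltnW lt); have h7 := Fpn i; have h8 := Fpn k.
  move: h1 h2 h3 h4 h5 h6 h7 h8 Fet; rewrite /ble; bsolve HB.
- move=> i k hik; case: (eqVneq i k) => [->|ne]; first by rewrite /ble HB.
  have lt : (i < k)%N by rewrite ltn_neqAle ne.
  rewrite /ble (F1 o i) (F1 o k).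
  have h1 := HE i; have h2 := HE k; have h3 := Fp i k lt.
  have h6 := Hdec i k hik; have h7 := Fpn i; have h8 := Fpn k.
  move: h1 h2 h3 h6 h7 h8 Fet; rewrite /ble; bsolve HB.
- move=> i hi; case: (Hr' i) => _; rewrite FE0 // subr0 mul1r => h.
  by rewrite (d0eq Hd h) Hz // ltnW.
move=> i; rewrite ltnS leq_eqVlt => /orP [/eqP ->|hi].
  rewrite Ht.
  have [f Hf] : exists f : nat -> B, forall k, f k = d o t * P k * (1 - d t (r k)).
    by exists (fun k => d o t * P k * (1 - d t (r k))).
  have key : forall i k, (i < k)%N -> (E i + f i) * (E k + f k) = 0.
    move=> i' k lt.
    have h1 := HE i'; have h2 := HE k; have h3 := Fp i' k lt; have h4 := FeD i'; have h5 := FeD k.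
    have h6 := FPD i' k lt; have h7 := Hf i'; have h8 := Hf k.
    move: h1 h2 h3 h4 h5 h6 h7 h8; bsolve HB.
  exists (fun i => if i is k.+1 then E k + f k else 1 - d o t); split; [|split].
  - move=> [|i'] [|k] hi hk nik //=.
    + have h1 := HE k; have h2 := Hf k; move: h1 h2 Fet; bsolve HB.
    + have h1 := HE i'; have h2 := Hf i'; move: h1 h2 Fet; bsolve HB.
    + case: (ltngtP i' k) => h; first exact: key.
        by rewrite mulrC key.
      by move: nik; rewrite h eqxx.
  - rewrite big_ord_recl /=.
    rewrite (eq_bigr (fun i : 'I_m => e * (p i - p i.+1) + d o t * (P i - P i.+1))); last first.
      move=> i' _ /=; rewrite add0n.
      have h1 := HE i'; have h2 := Hf i'; have h3 := HpS i'; have h4 := HPS i'; have h5 := Fpn i'.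
      move: h1 h2 h3 h4 h5; bsolve HB.
    rewrite big_split /= -!big_distrr /= !tele Hp0 HP0.
    have [m' em] : exists m', m = m'.+1 by exists m.-1; rewrite prednK // (leq_ltn_trans _ hj).
    have pm0 : p m = 0 by rewrite em HpS Fn // -ltnS -em.
    rewrite pm0.
    move: He; bsolve HB.
  - move=> [|k] hk /=.
      rewrite (dsym Hd t o); bsolve HB.
    rewrite (F1 t k) (dxx Hd t).
    have h1 := HE k; have h2 := Hf k; have h3 := FeD k.
    move: h1 h2 h3; bsolve HB.
apply: (comb_trans HB Hd (Hc i hi)).
move=> [|k] hk /=.
  by apply: (comb_pt HB (i0 := 0%N)) => //=; rewrite (dxx Hd).
apply: (comb_two HB (i0 := 0%N) (i1 := k.+1) (E := E k)) => //=.
  rewrite (dsym Hd (r k) o); have h1 := HE k; move: h1; bsolve HB.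
rewrite (F1 (r k) k) (dxx Hd (r k)); bsolve HB.
Qed.



Lemma trunc (B : comPzRingType) X (d : X -> X -> B) (Hd : boolean_metric d) (o : X) (r : nat -> X)
  (Hdec : forall i k, (i <= k)%N -> ble (d o (r k)) (d o (r i))) :
  forall m, (forall i, (m <= i)%N -> r i = o) ->
  exists n, (forall i, (i < n)%N -> r i <> o) /\ (forall i, (n <= i)%N -> r i = o).
Proof.
elim=> [H|m IH H]; first by exists 0%N.
case: (classic (r m = o)) => h.
  apply: IH => i; rewrite leq_eqVlt => /orP[/eqP<-//|]; exact: H.
exists m.+1; split; last exact: H.
move=> i hi ro; apply: h.
have := Hdec i m hi; rewrite /ble ro (dxx Hd) mulr0 => e.
by apply/esym/(d0eq Hd).
Qed.

Theorem mainTheorem4 (B : comPzRingType) (HB : boolean_ring B)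
  (X : Type) (d : X -> X -> B) (Hd : boolean_metric d) (Hcfg : CFG_space d)
  (o : X) : has_base d o.
Proof.
case: Hcfg => Hconv [m [s Hs]].
pose sn i := oapp s o (insub i : option 'I_m).
have snE : forall j : 'I_m, sn j = s j by move=> j; rewrite /sn valK.
have HA : forall y, comb d m sn y.
  move=> y; case: (Hs y) => n [x [a [Hx [[Hdis Hsum] Hc]]]].
  have [f Hf] : exists f : 'I_n -> 'I_m, forall i, x i = s (f i).
    exists (fun i => proj1_sig (constructive_indefinite_description _ (Hx i))).
    move=> i; exact: (proj2_sig (constructive_indefinite_description _ (Hx i))).
  pose xn i := oapp x o (insub i : option 'I_n).
  pose an i := oapp a 0 (insub i : option 'I_n).
  have xnE : forall i : 'I_n, xn i = x i by move=> i; rewrite /xn valK.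
  have anE : forall i : 'I_n, an i = a i by move=> i; rewrite /an valK.
  have xnE' : forall i (hi : (i < n)%N), xn i = x (Ordinal hi) := fun i hi => xnE (Ordinal hi).
  have anE' : forall i (hi : (i < n)%N), an i = a (Ordinal hi) := fun i hi => anE (Ordinal hi).
  apply: (comb_trans HB Hd (N := n) (x := xn)).
    exists an; split; [|split].
    - move=> i k hi hk nik; rewrite (anE' i hi) (anE' k hk); apply: Hdis.
      by rewrite -val_eqE.
    - by rewrite -[RHS]Hsum; apply: eq_bigr => i _; rewrite anE.
    - by move=> i hi; rewrite (anE' i hi) (xnE' i hi); apply: Hc.
  move=> i hi; apply: (comb_pt HB (i0 := f (Ordinal hi))) => //.
  by rewrite (xnE' i hi) snE Hf (dxx Hd).
have [r [Ho [Hdec [Hz Hc]]]] := core HB Hd Hconv o sn (leqnn m).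
have HY : forall y, comb d m.+1 (oc o r) y := fun y => comb_trans HB Hd (HA y) Hc.
have [n [Hnz Hzo]] := trunc Hd Hdec Hz.
exists n, (fun i : 'I_n => r i); split; last by move=> i k hik; apply: Hdec.
split; [|split; [split|]].
- move=> i k e; apply/eqP; apply: contraT => nik.
  have nik' : (i : nat) != k by rewrite val_eqE.
  have := Ho _ _ nik'; rewrite /Defs.orthogonal /= e (dxx Hd) => h.
  have h0 : d o (r k) = 0 by move: h; bsolve HB.
  by case: (Hnz k (ltn_ord k)); apply/esym/(d0eq Hd).
- by move=> i; apply: Hnz.
- by move=> i k nik; apply: Ho; rewrite val_eqE.
- move=> y; case: (HY y) => c [cd [cs cc]].
  exists m.+1, (fun i : 'I_m.+1 => oc o r i), (fun i : 'I_m.+1 => c i).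
  split; [|split; [split|]].
  + move=> [[|k] hk] /=; first by left.
    case: (ltnP k n) => hkn; first by right; exists (Ordinal hkn).
    by left; apply: Hzo.
  + by move=> i k nik; apply: cd => //; rewrite val_eqE.
  + exact: cs.
  + by move=> i; apply: cc.
Qed.
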